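(* Let $n$ be even, $k\ge1$, $q=2^k$, and $f(x)=a_0(x)+2a_1(x)+\cdots+2^{k-1}a_{k-1}(x)$ from $\mathbb{V}_n$ to $\mathbb{Z}_{2^k}$ with Boolean $a_j$. Then $f$ is $\mathbb{Z}_q$-bent if and only if for every $t=0,1,\ldots,k-1$ the function $f_t(x)=a_0(x)+2a_1(x)+\cdots+2^{k-t-1}a_{k-t-1}(x)$, regarded as a function from $\mathbb{V}_n$ to $\mathbb{Z}_{2^{k-t}}$, is gbent.
   Context: $\mathbb{V}_n$ is an $n$-dimensional $\mathbb{F}_2$-vector space with inner product $u\cdot x$. For $g:\mathbb{V}_n\to\mathbb{Z}_{2^m}$, $g$ is gbent if $|\sum_x\zeta_{2^m}^{g(x)}(-1)^{u\cdot x}|=2^{n/2}$ for all $u$, $\zeta_{2^m}=e^{2\pi i/2^m}$ (for $m=1$ this is ordinary bentness). $f:\mathbb{V}_n\to\mathbb{Z}_q$ is $\mathbb{Z}_q$-bent if $|\sum_{x\in\mathbb{V}_n}\zeta_q^{af(x)}(-1)^{u\cdot x}|=2^{n/2}$ for every $u\in\mathbb{V}_n$ and every nonzero $a\in\mathbb{Z}_q$. *)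

(* Defs.v *)
From HB Require Import structures.
From mathcomp Require Import all_boot all_order all_algebra.
From mathcomp Require Import complex.
From mathcomp Require Import reals trigo Rstruct.
Set Implicit Arguments. Unset Strict Implicit. Unset Printing Implicit Defensive.
Import Order.TTheory GRing.Theory Num.Theory.
Local Open Scope ring_scope.

Definition Rr : realType := Rdefinitions.R.
Definition Cx : numClosedFieldType := (Rr[i])%C.

Definition V (n : nat) := 'rV['F_2]_n.

Definition dotb (n : nat) (u x : V n) : bool := ((u *m x^T) 0 0 == 1).

Definition zeta (N : nat) : Cx :=
  (Complex (cos (2 * pi / N%:R)) (sin (2 * pi / N%:R)) : Rr[i])%C.

(* Sum_x zeta_N^{h(x)} (-1)^{u.x}, for h with values in Z_N (represented by nat;
   only h(x) mod N matters since zeta_N^N = 1). *)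
Definition walsh (n N : nat) (h : V n -> nat) (u : V n) : Cx :=
  \sum_(x : V n) zeta N ^+ h x * (-1) ^+ dotb u x.

Definition two_pow_half (n : nat) : Cx := ((Num.sqrt (2 : Rr)) ^+ n)%:C%C.

Definition gbent (n m : nat) (g : V n -> nat) : Prop :=
  forall u : V n, `|walsh (2 ^ m) g u| = two_pow_half n.

Definition Zq_bent (n q : nat) (f : V n -> nat) : Prop :=
  forall (u : V n) (a : 'I_q), a != 0 :> nat ->
    `|walsh q (fun x => a * f x)%N u| = two_pow_half n.

(* f_t(x) = a_0(x) + 2 a_1(x) + ... + 2^{k-t-1} a_{k-t-1}(x), with Boolean a_j;
   with t = 0 this is f itself. *)
Definition trunc_fun (n k t : nat) (a : nat -> V n -> bool) : V n -> nat :=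
  fun x => (\sum_(j < k - t) 2 ^ j * a j x)%N.

(* Main.v *)
Set Warnings "-notation-overridden,-ambiguous-paths,-notation-incompatible-prefix,-deprecated".
From mathcomp Require Import all_boot all_order all_algebra.
Import GRing.Theory.
Local Open Scope ring_scope.
Require Import Defs.
From mathcomp Require Import complex reals trigo Rstruct.
From mathcomp Require Import ring.
Import Order.TTheory Num.Theory.
Local Open Scope ring_scope.
Definition qpol (M : nat) : {poly int} := ('X - (-1)%:P) ^+ M + 1.
Lemma coef_qpol e i : (i < 2 ^ e)%N -> (2 %| (qpol (2 ^ e))`_i)%Z.
Proof.
move=> ie; have ch : 2%N \in [char 'F_2] by apply: pchar_Fp.
rewrite (dvdz_pcharf ch).
have chp : 2%N \in [char {poly 'F_2}] by rewrite pchar_poly.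
have : map_poly (intr : int -> 'F_2) (qpol (2 ^ e)) = 'X^(2 ^ e).
  rewrite /qpol rmorphD rmorphXn /= rmorphB /= map_polyX map_polyC /= rmorph1.
  rewrite mulrNz polyCN opprK exprDn_pchar; last first.
    have := pnatX [char {poly 'F_2}] 2 e; rewrite (pnatE _ (isT : prime 2)) chp /=.
    by move=> ->.
  by rewrite mulr1z polyC1 expr1n -addrA -mulr2n (pcharf0 chp) addr0.
move=> H; have := congr1 (fun p : {poly 'F_2} => p`_i) H.
by rewrite coef_map /= coefXn ltn_eqF // => ->.
Qed.
Lemma size_qpol M : (0 < M)%N -> size (qpol M) = M.+1.
Proof.
move=> M0; rewrite /qpol size_polyDl size_exp_XsubC // size_poly1 //.
Qed.
Lemma lead_qpol M : (0 < M)%N -> lead_coef (qpol M) = 1.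
Proof.
move=> M0; rewrite /qpol lead_coefDl ?size_exp_XsubC ?size_poly1 //.
by apply/eqP; rewrite -monicE monic_exp // monicXsubC.
Qed.
Lemma coef0_qpol M : (qpol M)`_0 = 2.
Proof. by rewrite -horner_coef0 /qpol !hornerE opprK expr1n. Qed.

Lemma irr_qpol e : irreducible_poly (qpol (2 ^ e)).
Proof.
have M0 : (0 < 2 ^ e)%N by rewrite expn_gt0.
apply: (@eisenstein_crit 2).
- done.
- by rewrite size_qpol // eqSS -lt0n.
- by rewrite lead_qpol.
- by rewrite coef0_qpol.
- by move=> i; rewrite size_qpol //= => /coef_qpol.
Qed.

Lemma indep e (z : Cx) (d : nat -> int) : z ^+ (2 ^ e) = -1 ->
  \sum_(j < 2 ^ e) (d j)%:~R * z ^+ j = 0 -> forall j, (j < 2 ^ e)%N -> d j = 0.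
Proof.
move=> zM hs.
have M0 : (0 < 2 ^ e)%N by rewrite expn_gt0.
set r : {poly int} := \poly_(j < 2 ^ e) d j.
suff r0 : r = 0.
  by move=> j jM; have := congr1 (fun p : {poly int} => p`_j) r0; rewrite coef_poly jM coef0.
apply/eqP; apply: contraT => rn0.
set r' := r \Po ('X - (-1)%:P).
have sr' : size r' = size r by rewrite size_comp_poly2 // size_XsubC.
have cop : coprimep (map_poly (intr : int -> rat) (qpol (2 ^ e))) (map_poly intr r').
  have irrQ : irreducible_poly (map_poly (intr : int -> rat) (qpol (2 ^ e))).
    by apply/irreducible_rat_int; apply: irr_qpol.
  rewrite (irreducible_poly_coprime _ irrQ).
  apply/negP => dv.
  have r'0 : map_poly (intr : int -> rat) r' != 0.
    by rewrite -size_poly_eq0 size_rat_int_poly sr' size_poly_eq0.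
  have := dvdp_leq r'0 dv; rewrite !size_rat_int_poly sr' size_qpol //.
  by apply/negP; rewrite -ltnNge ltnS size_poly.
have mm (p : {poly int}) : map_poly (ratr : rat -> Cx) (map_poly intr p) = map_poly intr p.
  by rewrite -map_poly_comp; apply: eq_map_poly => c /=; rewrite ratr_int.
rewrite -(coprimep_map (ratr : {rmorphism rat -> Cx})) !mm in cop.
have := coprimep_root cop (x := z - 1).
have mr : map_poly (intr : int -> Cx) r = \poly_(j < 2 ^ e) (d j)%:~R.
  apply/polyP=> i; rewrite coef_map !coef_poly; case: ifP => //= _.
rewrite /root /qpol rmorphD rmorphXn /= rmorphB /= map_polyX map_polyC /= rmorph1.
rewrite !hornerE mulrNz mulr1z opprK subrK zM addNr eqxx.
rewrite /r' map_comp_poly horner_comp mr horner_poly rmorphB /= map_polyX map_polyC /=.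
rewrite !hornerE mulrNz mulr1z opprK subrK hs eqxx.
by move=> /(_ isT).
Qed.
Definition E (t : Rr) : Cx := (Complex (cos t) (sin t) : Rr[i])%C.

Lemma EM a b : E a * E b = E (a + b).
Proof.
rewrite /E trigo.cosD trigo.sinD.
change ((Complex (cos a * cos b - sin a * sin b) (cos a * sin b + sin a * cos b) : Rr[i])%C
   = (Complex (cos a * cos b - sin a * sin b) (sin a * cos b + cos a * sin b))).
by rewrite [sin a * cos b + _]addrC.
Qed.

Lemma EX t j : E t ^+ j = E (j%:R * t).
Proof.
elim: j => [|j IH].
  rewrite expr0 mul0r /E trigo.cos0 trigo.sin0; reflexivity.
by rewrite exprS IH EM -[j.+1]addn1 natrD mulrDl mul1r addrC.
Qed.

Lemma zetaE N : zeta N = E (2 * pi / N%:R).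
Proof. by []. Qed.

Lemma zeta_pow k t : (t <= k)%N -> zeta (2 ^ k) ^+ (2 ^ t) = zeta (2 ^ (k - t)).
Proof.
move=> tk; rewrite !zetaE EX; congr E.
have -> : (2 ^ k = 2 ^ t * 2 ^ (k - t))%N by rewrite -expnD subnKC.
rewrite natrM.
have h1 : (2 ^ t)%:R != 0 :> Rr by rewrite pnatr_eq0 expn_eq0.
have h2 : (2 ^ (k - t))%:R != 0 :> Rr by rewrite pnatr_eq0 expn_eq0.
by field; rewrite h1 h2.
Qed.

Lemma zeta_half M : (0 < M)%N -> zeta (M.*2) ^+ M = -1.
Proof.
move=> M0; rewrite zetaE EX.
have -> : M%:R * (2 * pi / (M.*2)%:R) = pi :> Rr.
  have h1 : M%:R != 0 :> Rr by rewrite pnatr_eq0 -lt0n.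
  rewrite -muln2 natrM; field; by rewrite h1.
rewrite /E trigo.cospi trigo.sinpi; apply/eqP; rewrite eq_complex /= oppr0 !eqxx //.
Qed.
Definition Wz {n : nat} (z : Cx) (h : V n -> nat) (u : V n) : Cx :=
  \sum_(x : V n) z ^+ h x * (-1) ^+ dotb u x.

Definition ex {n : nat} (M : nat) (h : V n -> nat) (x y : V n) : nat := (h x + (M.*2).-1 * h y)%N.
Definition sg {n : nat} (M : nat) (h : V n -> nat) (u x y : V n) : nat :=
  (dotb u x + dotb u y + ex M h x y %/ M)%N.

Definition D {n : nat} (M : nat) (h : V n -> nat) (u : V n) (j : nat) : int :=
  \sum_(x : V n) \sum_(y : V n) (((ex M h x y %% M)%N == j)%:R * (-1) ^+ sg M h u x y).

Lemma conj_root (z : Cx) N : (0 < N)%N -> z ^+ N = 1 -> z^* = z ^+ N.-1.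
Proof.
move=> N0 zN.
have z0 : z != 0.
  apply/negP => /eqP z0; move: zN; rewrite z0 expr0n.
  by case: N N0 => // N' _ /eqP; rewrite eq_sym oner_eq0.
have nz : `|z| = 1.
  apply/eqP; rewrite -(pexpr_eq1 N0) ?normr_ge0 // -normrX zN normr1 //.
apply: (mulfI z0); rewrite -normCK nz expr1n -exprS prednK //.
Qed.

Lemma sqW n e (z : Cx) (h : V n -> nat) (u : V n) : z ^+ (2 ^ e) = -1 ->
  `|Wz z h u| ^+ 2 = \sum_(j < 2 ^ e) (D (2 ^ e) h u j)%:~R * z ^+ j.
Proof.
set M := (2 ^ e)%N => zM.
have M0 : (0 < M)%N by rewrite expn_gt0.
have N0 : (0 < M.*2)%N by rewrite double_gt0.
have zN : z ^+ M.*2 = 1 by rewrite -addnn exprD zM mulrNN mulr1.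
rewrite normCK /Wz rmorph_sum /= mulr_suml.
have term x y : z ^+ h x * (-1) ^+ dotb u x * (z ^+ h y * (-1) ^+ dotb u y)^* =
   (-1) ^+ sg M h u x y * z ^+ (ex M h x y %% M)%N.
  have hE : z ^+ h x * z ^+ ((M.*2).-1 * h y) =
      (-1) ^+ (ex M h x y %/ M) * z ^+ (ex M h x y %% M).
    rewrite -exprD -/(ex M h x y) {1}(divn_eq (ex M h x y) M) exprD mulnC exprM zM //.
  rewrite rmorphM rmorphXn /= rmorphXn rmorphN1 (@conj_root z _ N0 zN) -exprM.
  by rewrite mulrACA hE /sg !exprD mulrC mulrA.
transitivity (\sum_x \sum_y ((-1) ^+ sg M h u x y * z ^+ (ex M h x y %% M)%N) : Cx).
  apply: eq_bigr => x _; rewrite mulr_sumr; apply: eq_bigr => y _; exact: term.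
transitivity (\sum_x \sum_y \sum_(j < M)
   ((((ex M h x y %% M)%N == j)%:R * (-1) ^+ sg M h u x y : int)%:~R * z ^+ j) : Cx).
  apply: eq_bigr => x _; apply: eq_bigr => y _.
  rewrite (bigD1 (Ordinal (ltn_pmod (ex M h x y) M0))) //= eqxx big1 ?addr0.
    by rewrite mul1r rmorphXn rmorphN1.
  move=> j hj; have -> : ((ex M h x y %% M)%N == j) = false.
    apply/negbTE; apply: contra hj => /eqP ej; apply/eqP/val_inj => /=.
    by rewrite ej.
  by rewrite mul0r rmorph0 mul0r.
transitivity (\sum_x \sum_(j < M) \sum_y
   ((((ex M h x y %% M)%N == j)%:R * (-1) ^+ sg M h u x y : int)%:~R * z ^+ j) : Cx).
  by apply: eq_bigr => x _; rewrite exchange_big.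
rewrite exchange_big; apply: eq_bigr => j _ /=.
rewrite /D rmorph_sum mulr_suml; apply: eq_bigr => x _.
by rewrite rmorph_sum mulr_suml.
Qed.

Lemma T2 n : two_pow_half n ^+ 2 = (2 ^ n)%:R.
Proof.
rewrite /two_pow_half -rmorphXn /= -exprM mulnC exprM sqr_sqrtr ?ler0n //.
by rewrite natrX rmorphXn /= rmorph_nat.
Qed.

Lemma sum_const e (z : Cx) c : \sum_(j < 2 ^ e) ((if j == 0%N :> nat then c else 0 : int)%:~R * z ^+ j) = c%:~R.
Proof.
have M0 : (0 < 2 ^ e)%N by rewrite expn_gt0.
rewrite (bigD1 (Ordinal M0)) //= big1 ?addr0 ?expr0 ?mulr1 //.
by move=> j hj; rewrite ifN ?mul0r //; apply: contra hj => /eqP ej; apply/eqP/val_inj.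
Qed.

Lemma key n e (z1 z2 : Cx) (h : V n -> nat) u : z1 ^+ (2 ^ e) = -1 -> z2 ^+ (2 ^ e) = -1 ->
  `|Wz z1 h u| = two_pow_half n -> `|Wz z2 h u| = two_pow_half n.
Proof.
move=> h1 h2 H.
have hD : forall j, (j < 2 ^ e)%N -> D (2 ^ e) h u j = (if j == 0%N then (2 ^ n)%N%:Z else 0).
  pose d := fun j : nat => D (2 ^ e) h u j - (if j == 0%N then (2 ^ n)%N%:Z else 0).
  have S : \sum_(j < 2 ^ e) (d j)%:~R * z1 ^+ j = 0.
    rewrite /d (eq_bigr (fun j : 'I_(2 ^ e) => (D (2 ^ e) h u j)%:~R * z1 ^+ j -
       (if j == 0%N :> nat then (2 ^ n)%N%:Z else 0)%:~R * z1 ^+ j)); last first.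
      by move=> j _; rewrite rmorphB mulrBl.
    by rewrite sumrB -sqW // sum_const H T2 subrr.
  move=> j hj; have := @indep e z1 d h1 S j hj.
  by move=> /eqP; rewrite /d subr_eq0 => /eqP.
apply/eqP; rewrite -(@eqrXn2 _ 2) ?normr_ge0 //; last first.
  by rewrite /two_pow_half ler0c exprn_ge0 // sqrtr_ge0.
rewrite (@sqW n e) // T2.
rewrite (eq_bigr (fun j : 'I_(2 ^ e) => (if j == 0%N :> nat then (2 ^ n)%N%:Z else 0)%:~R * z2 ^+ j)).
  by rewrite sum_const.
by move=> j _; rewrite hD.
Qed.

Lemma zeta2 s : zeta (2 ^ s.+1) ^+ (2 ^ s) = -1.
Proof. by rewrite expnS mul2n zeta_half // expn_gt0. Qed.

Lemma zeta1 s : zeta (2 ^ s.+1) ^+ (2 ^ s.+1) = 1.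
Proof. by rewrite {2}expnS mul2n -addnn exprD zeta2 mulrNN mulr1. Qed.

Lemma trunc_mod n k t (a : nat -> V n -> bool) x : (t <= k)%N ->
  trunc_fun k 0 a x = trunc_fun k t a x %[mod 2 ^ (k - t)].
Proof.
move=> tk; rewrite /trunc_fun subn0.
rewrite -!(big_mkord xpredT (fun j => 2 ^ j * a j x)%N).
rewrite (@big_cat_nat _ _ _ (k - t) 0 k) //= ?leq_subr //.
rewrite -modnDmr.
have : (2 ^ (k - t) %| \sum_(k - t <= i < k) 2 ^ i * a i x)%N.
  rewrite big_nat_cond; apply: dvdn_sum => i /andP [/andP [hi _] _].
  by apply: dvdn_mulr; rewrite dvdn_exp2l.
by rewrite /dvdn => /eqP H; rewrite H addn0.
Qed.

Lemma walsh_red n k t b c (a : nat -> V n -> bool) u : (t < k)%N -> c = (b * 2 ^ t)%N ->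
  walsh (2 ^ k) (fun x => (c * trunc_fun k 0 a x)%N) u =
  Wz (zeta (2 ^ (k - t)) ^+ b) (trunc_fun k t a) u.
Proof.
move=> tk ->; rewrite /walsh /Wz; apply: eq_bigr => x _.
have ks : (k - t = (k - t.+1).+1)%N by rewrite subnSK.
rewrite (mulnC b) !exprM (@zeta_pow k t (ltnW tk)).
have zN : (zeta (2 ^ (k - t)) ^+ b) ^+ (2 ^ (k - t)) = 1.
  by rewrite exprAC ks zeta1 expr1n.
by rewrite -(expr_mod (trunc_fun k 0 a x) zN) -(expr_mod (trunc_fun k t a x) zN) (@trunc_mod n k t a x (ltnW tk)).
Qed.

Local Close Scope ring_scope.

Theorem proposition5 (n k : nat) (a : nat -> V n -> bool) :
  ~~ odd n -> (1 <= k)%N ->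
  Zq_bent (2 ^ k) (trunc_fun k 0 a) <->
  (forall t : nat, (t < k)%N -> gbent (k - t) (trunc_fun k t a)).
Proof.
move=> _ k1; split.
- move=> HZ t tk u.
  have a0 : (2 ^ t < 2 ^ k)%N by rewrite ltn_exp2l.
  have := HZ u (Ordinal a0); rewrite expn_eq0 /= => /(_ isT).
  rewrite (@walsh_red n k t 1 _ a u tk) ?mul1n // expr1.
- move=> HG u c c0.
  have cpos : (0 < c)%N by rewrite lt0n.
  have [b cob cE] := pfactor_coprime (isT : prime 2) cpos.
  move: cE; set t := logn 2 c => cE.
  have ob : odd b by rewrite -coprime2n.
  have tk : (t < k)%N.
    rewrite -(@ltn_exp2l 2) //; apply: leq_ltn_trans (ltn_ord c).
    by rewrite cE leq_pmull // odd_gt0.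
  rewrite (@walsh_red n k t b c a u tk cE).
  have ks : (k - t = (k - t.+1).+1)%N by rewrite subnSK.
  apply: (@key n (k - t.+1) (zeta (2 ^ (k - t))) (zeta (2 ^ (k - t)) ^+ b)).
  + by rewrite ks zeta2.
  + by rewrite exprAC ks zeta2 -signr_odd ob expr1.
  + exact: HG.
Qed.
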